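(* There is no algebra automorphism $\theta$ of $U^+$ with $\theta((z))=(z')$, and none with $\theta((z'))=(z)$.
   Context: $\Bbbk$ is an algebraically closed field of characteristic zero and $q\in\Bbbk^\times$ is not a root of unity. $U^+$ is the $\Bbbk$-algebra generated by $e_1,e_2$ with relations (S1) $e_1^2e_2-(q^2+q^{-2})e_1e_2e_1+e_2e_1^2=0$ and (S2) $e_2^3e_1-(q^2+1+q^{-2})e_2^2e_1e_2+(q^2+1+q^{-2})e_2e_1e_2^2-e_1e_2^3=0$. Set $e_3=e_1e_2-q^2e_2e_1$, $z=e_2e_3-q^2e_3e_2$, $w=e_2e_3-e_3e_2$, $z'=e_1w-q^{-4}we_1$; $(z)$, $(z')$ are the two-sided ideals they generate (both central elements). *)

(* Defs.v *)
From HB Require Import structures.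
From mathcomp Require Import all_boot all_order all_algebra.
Set Implicit Arguments. Unset Strict Implicit. Unset Printing Implicit Defensive.
Import GRing.Theory.
Local Open Scope ring_scope.

Definition Urels (k : fieldType) (q : k) (A : algType k) (a b : A) : Prop :=
  (a * a * b - (q ^+ 2 + q ^- 2) *: (a * b * a) + b * a * a = 0) /\
  (b ^+ 3 * a - (q ^+ 2 + 1 + q ^- 2) *: (b ^+ 2 * a * b)
     + (q ^+ 2 + 1 + q ^- 2) *: (b * a * b ^+ 2) - a * b ^+ 3 = 0).

(* (A, e1, e2) is U^+: the k-algebra generated by e1, e2 subject to (S1), (S2),
   given by its universal property (presentation by generators and relations). *)
Definition is_Uplus (k : fieldType) (q : k) (A : algType k) (e1 e2 : A) : Prop :=
  Urels q e1 e2 /\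
  forall (B : algType k) (b1 b2 : B), Urels q b1 b2 ->
    exists f : {lrmorphism A -> B},
      [/\ f e1 = b1, f e2 = b2 &
          forall g : {lrmorphism A -> B}, g e1 = b1 -> g e2 = b2 ->
            forall x, g x = f x].

Section Elements.
Variables (k : fieldType) (q : k) (A : algType k) (e1 e2 : A).
Definition e3 : A := e1 * e2 - q ^+ 2 *: (e2 * e1).
Definition zU : A := e2 * e3 - q ^+ 2 *: (e3 * e2).
Definition wU : A := e2 * e3 - e3 * e2.
Definition zU' : A := e1 * wU - q ^- 4 *: (wU * e1).
End Elements.

Definition ideal_gen (R : ringType) (x : R) (y : R) : Prop :=
  exists s : seq (R * R), y = \sum_(p <- s) p.1 * x * p.2.

Definition maps_onto (R : ringType) (f : R -> R) (I J : R -> Prop) : Prop :=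
  forall y, J y <-> exists x, I x /\ f x = y.

(* Main.v *)
From HB Require Import structures.
From mathcomp Require Import all_boot all_order all_algebra ring.
Import GRing.Theory.
Local Open Scope ring_scope.
Set Implicit Arguments.

Section Trunc.
Variable k : fieldType.
Record T5 := Mk5 { c0 : k; c1 : k; c2 : k; c3 : k; c4 : k }.
Definition t5to (x : T5) := (c0 x, c1 x, c2 x, c3 x, c4 x).
Definition t5of (p : k * k * k * k * k) :=
  let '(a, b, c, d, e) := p in Mk5 a b c d e.
Lemma t5K : cancel t5to t5of. Proof. by case. Qed.
HB.instance Definition _ := Choice.copy T5 (can_type t5K).

Definition t5zero := Mk5 0 0 0 0 0.
Definition t5opp x := Mk5 (- c0 x) (- c1 x) (- c2 x) (- c3 x) (- c4 x).
Definition t5add x y := Mk5 (c0 x + c0 y) (c1 x + c1 y) (c2 x + c2 y)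
  (c3 x + c3 y) (c4 x + c4 y).
Lemma t5addA : associative t5add.
Proof. by case=> ? ? ? ? ? [] ? ? ? ? ? [] ? ? ? ? ?; rewrite /t5add /=; congr Mk5; ring. Qed.
Lemma t5addC : commutative t5add.
Proof. by case=> ? ? ? ? ? [] ? ? ? ? ?; rewrite /t5add /=; congr Mk5; ring. Qed.
Lemma t5add0 : left_id t5zero t5add.
Proof. by case=> ? ? ? ? ?; rewrite /t5add /=; congr Mk5; ring. Qed.
Lemma t5addN : left_inverse t5zero t5opp t5add.
Proof. by case=> ? ? ? ? ?; rewrite /t5add /=; congr Mk5; ring. Qed.
HB.instance Definition _ := GRing.isZmodule.Build T5 t5addA t5addC t5add0 t5addN.

Definition t5one := Mk5 1 0 0 0 0.
Definition t5mul x y := Mk5 (c0 x * c0 y) (c0 x * c1 y + c1 x * c0 y)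
  (c0 x * c2 y + c1 x * c1 y + c2 x * c0 y)
  (c0 x * c3 y + c1 x * c2 y + c2 x * c1 y + c3 x * c0 y)
  (c0 x * c4 y + c1 x * c3 y + c2 x * c2 y + c3 x * c1 y + c4 x * c0 y).
Lemma t5mulA : associative t5mul.
Proof. by case=> ? ? ? ? ? [] ? ? ? ? ? [] ? ? ? ? ?; rewrite /t5mul /=; congr Mk5; ring. Qed.
Lemma t5mulC : commutative t5mul.
Proof. by case=> ? ? ? ? ? [] ? ? ? ? ?; rewrite /t5mul /=; congr Mk5; ring. Qed.
Lemma t5mul1 : left_id t5one t5mul.
Proof. by case=> ? ? ? ? ?; rewrite /t5mul /=; congr Mk5; ring. Qed.
Lemma t5mulD : left_distributive t5mul t5add.
Proof. by case=> ? ? ? ? ? [] ? ? ? ? ? [] ? ? ? ? ?; rewrite /t5mul /t5add /=; congr Mk5; ring. Qed.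
Lemma t5one0 : t5one != 0.
Proof. by apply/eqP => -[] /eqP; rewrite oner_eq0. Qed.
HB.instance Definition _ := GRing.Zmodule_isComNzRing.Build T5 t5mulA t5mulC t5mul1 t5mulD t5one0.

Definition t5scale (a : k) x := Mk5 (a * c0 x) (a * c1 x) (a * c2 x) (a * c3 x) (a * c4 x).
Lemma t5scaleA a b v : t5scale a (t5scale b v) = t5scale (a * b) v.
Proof. by case: v => ? ? ? ? ?; rewrite /t5scale /=; congr Mk5; ring. Qed.
Lemma t5scale1 : left_id 1 t5scale.
Proof. by case=> ? ? ? ? ?; rewrite /t5scale /=; congr Mk5; ring. Qed.
Lemma t5scaleDr : right_distributive t5scale t5add.
Proof. by move=> a [] ? ? ? ? ? [] ? ? ? ? ?; rewrite /t5scale /t5add /=; congr Mk5; ring. Qed.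
Lemma t5scaleDl v a b : t5scale (a + b) v = t5add (t5scale a v) (t5scale b v).
Proof. by case: v => ? ? ? ? ?; rewrite /t5scale /t5add /=; congr Mk5; ring. Qed.
HB.instance Definition _ := GRing.Zmodule_isLmodule.Build k T5 t5scaleA t5scale1 t5scaleDr t5scaleDl.
Lemma t5scaleAl (a : k) (u v : T5) : t5scale a (t5mul u v) = t5mul (t5scale a u) v.
Proof. by case: u v => ? ? ? ? ? [] ? ? ? ? ?; rewrite /t5scale /t5mul /=; congr Mk5; ring. Qed.
HB.instance Definition _ := GRing.Lmodule_isLalgebra.Build k T5 t5scaleAl.
HB.instance Definition _ := GRing.Lalgebra_isComAlgebra.Build k T5.
End Trunc.

Arguments Mk5 {k}.
Require Import Defs.

Lemma gen_S1 (k : fieldType) (R : comAlgType k) (a b : R) (c : k) :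
  a * a * b - c *: (a * b * a) + b * a * a = (2 - c%:A) * (a * a * b).
Proof. rewrite -[c *: (a * b * a)]mulr_algl; move: (c%:A) => d; ring. Qed.
Lemma gen_S2 (k : fieldType) (R : comAlgType k) (a b : R) (c : k) :
  b ^+ 3 * a - c *: (b ^+ 2 * a * b) + c *: (b * a * b ^+ 2) - a * b ^+ 3 = 0.
Proof.
rewrite -[c *: (b ^+ 2 * a * b)]mulr_algl -[c *: (b * a * b ^+ 2)]mulr_algl.
move: (c%:A) => d; ring.
Qed.

Lemma gen_z (k : fieldType) (R : comAlgType k) (x : R) (c : k) :
  x * (x * x * x - c ^+ 2 *: (x * (x * x))) - c ^+ 2 *: ((x * x * x - c ^+ 2 *: (x * (x * x))) * x)
  = ((1 - c ^+ 2) ^+ 2)%:A * x ^+ 4.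
Proof.
pose d : R := (c ^+ 2)%:A.
have E : forall y : R, c ^+ 2 *: y = d * y by move=> y; rewrite /d mulr_algl.
rewrite !E.
have -> : ((1 - c ^+ 2) ^+ 2)%:A = (1 - d) ^+ 2 :> R.
  by rewrite -in_algE rmorphXn rmorphB /= ?rmorph1 ?in_algE ?scale1r.
clearbody d; ring.
Qed.

Section Main.
Variable k : fieldType.
Local Notation B := (T5 k).

Lemma mulE (u v : B) : u * v = t5mul u v. Proof. by []. Qed.
Lemma zeroE : (0 : B) = t5zero k. Proof. by []. Qed.
Lemma oneE : (1 : B) = t5one k. Proof. by []. Qed.
Lemma scaleE (a : k) (u : B) : a *: u = t5scale a u. Proof. by []. Qed.

Definition xx : B := Mk5 0 1 0 0 0.

Lemma xx2 : xx * xx = Mk5 0 0 1 0 0.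
Proof. rewrite mulE /t5mul /xx /=; congr Mk5; ring. Qed.

Lemma xx4' : xx ^+ 4 = Mk5 0 0 0 0 1.
Proof.
have -> : xx ^+ 4 = (xx * xx) * (xx * xx) by rewrite !exprS expr0 mulr1 !mulrA.
rewrite xx2 mulE /t5mul /=; congr Mk5; ring.
Qed.

Lemma xx5 : xx ^+ 5 = 0.
Proof.
rewrite exprS mulrC xx4' mulE zeroE /t5mul /t5zero /xx /=; congr Mk5; ring.
Qed.

Lemma xx4 (a : k) : a%:A * xx ^+ 4 = Mk5 0 0 0 0 a.
Proof.
rewrite xx4' scaleE oneE mulE /t5mul /t5one /t5scale /=.
congr Mk5; ring.
Qed.

Lemma urels_xx (q : k) : Urels q (xx * xx) xx.
Proof.
split; last exact: gen_S2.
rewrite gen_S1.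
have -> : xx * xx * (xx * xx) * xx = xx ^+ 5 by rewrite !exprS expr0 mulr1 !mulrA.
by rewrite xx5 mulr0.
Qed.

Variables (q : k) (A : algType k) (e1 e2 : A).

Lemma h_zU' (h : A -> B)
  (hB : forall u v, h (u - v) = h u - h v)
  (hM : forall u v, h (u * v) = h u * h v)
  (hZ : forall (a : k) u, h (a *: u) = a *: h u) :
  h (zU' q e1 e2) = 0.
Proof.
have hw : h (wU q e1 e2) = 0.
  by rewrite /wU hB !hM mulrC subrr.
by rewrite /zU' hB hZ !hM hw mulr0 mul0r scaler0 subrr.
Qed.

Lemma h_ideal (h : A -> B)
  (h0 : h 0 = 0)
  (hD : forall u v, h (u + v) = h u + h v)
  (hB : forall u v, h (u - v) = h u - h v)
  (hM : forall u v, h (u * v) = h u * h v)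
  (hZ : forall (a : k) u, h (a *: u) = a *: h u) x :
  ideal_gen (zU' q e1 e2) x -> h x = 0.
Proof.
case=> s ->.
rewrite (big_morph h hD h0) big1 // => p _.
by rewrite !hM (h_zU' h hB hM hZ) mulr0 mul0r.
Qed.

Lemma f_zU (h : A -> B)
  (hB : forall u v, h (u - v) = h u - h v)
  (hM : forall u v, h (u * v) = h u * h v)
  (hZ : forall (a : k) u, h (a *: u) = a *: h u) :
  h e1 = xx * xx -> h e2 = xx -> h (zU q e1 e2) = ((1 - q ^+ 2) ^+ 2)%:A * xx ^+ 4.
Proof.
move=> h1 h2.
rewrite /zU /e3 hB hZ !hM hB hZ !hM h1 h2.
exact: gen_z.
Qed.

End Main.

Theorem proposition3p3 (k : closedFieldType) (Hchar : [pchar k] =i pred0)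
  (q : k) (Hq0 : q != 0) (Hq : forall n : nat, (0 < n)%N -> q ^+ n != 1)
  (A : algType k) (e1 e2 : A) (HU : is_Uplus q e1 e2) :
  (~ exists theta : {lrmorphism A -> A}, bijective theta /\
       maps_onto theta (ideal_gen (zU q e1 e2)) (ideal_gen (zU' q e1 e2))) /\
  (~ exists theta : {lrmorphism A -> A}, bijective theta /\
       maps_onto theta (ideal_gen (zU' q e1 e2)) (ideal_gen (zU q e1 e2))).
Proof.
have [f [f1 f2 _]] := HU.2 _ _ _ (@urels_xx _ q).
have fz : f (zU q e1 e2) != 0.
  rewrite (@f_zU _ q _ e1 e2 f) ?xx4 //; last 3 first.
  - by move=> u v; rewrite rmorphB.
  - by move=> u v; rewrite rmorphM.
  - by move=> a u; rewrite linearZ. apply/eqP => -[] /eqP.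
  rewrite expf_eq0 /= subr_eq0 eq_sym.
  by apply/negP; apply: Hq.
have Iz : ideal_gen (zU q e1 e2) (zU q e1 e2).
  by exists [:: (1, 1)]; rewrite big_seq1 /= mul1r mulr1.
split.
- case=> theta [[g tg gt] Hm].
  have /Hm hz : exists x, ideal_gen (zU q e1 e2) x /\ theta x = theta (zU q e1 e2).
    by exists (zU q e1 e2).
  have ginj u v : theta u = theta v -> u = v.
    by move=> /(congr1 g); rewrite !tg.
  have gD u v : g (u + v) = g u + g v by apply: ginj; rewrite rmorphD /= !gt.
  have gB u v : g (u - v) = g u - g v by apply: ginj; rewrite rmorphB /= !gt.
  have gM u v : g (u * v) = g u * g v by apply: ginj; rewrite rmorphM /= !gt.
  have gZ (a : k) u : g (a *: u) = a *: g u by apply: ginj; rewrite linearZ /= !gt.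
  have g0 : g 0 = 0 by apply: ginj; rewrite rmorph0 gt.
  have H0 : f (g 0) = 0 by rewrite g0 rmorph0.
  have HD u v : f (g (u + v)) = f (g u) + f (g v) by rewrite gD rmorphD.
  have HB u v : f (g (u - v)) = f (g u) - f (g v) by rewrite gB rmorphB.
  have HM u v : f (g (u * v)) = f (g u) * f (g v) by rewrite gM rmorphM.
  have HZ (a : k) u : f (g (a *: u)) = a *: f (g u) by rewrite gZ linearZ.
  have hx := @h_ideal _ q _ e1 e2 (fun x => f (g x)) H0 HD HB HM HZ _ hz.
  by move: fz; rewrite /= tg in hx; rewrite hx eqxx.
- case=> theta [_ Hm].
  have [x [Ix tx]] := (Hm (zU q e1 e2)).1 Iz.
  have H0 : f (theta 0) = 0 by rewrite !rmorph0.
  have HD u v : f (theta (u + v)) = f (theta u) + f (theta v) by rewrite !rmorphD.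
  have HB u v : f (theta (u - v)) = f (theta u) - f (theta v) by rewrite !rmorphB.
  have HM u v : f (theta (u * v)) = f (theta u) * f (theta v) by rewrite !rmorphM.
  have HZ (a : k) u : f (theta (a *: u)) = a *: f (theta u) by rewrite !linearZ.
  have hx := @h_ideal _ q _ e1 e2 (fun x => f (theta x)) H0 HD HB HM HZ _ Ix.
  by move: fz; rewrite /= tx in hx; rewrite hx eqxx.
Qed.
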